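(* There exist an undirected graph $G=(V,E)$, pairs $(u_i,v_i)$ of distinct nodes of $V$, $1\le i\le4$, with $\sigma_{u_1v_1}=\sigma_{u_2v_2}=2$ and $\sigma_{u_3v_3}=\sigma_{u_4v_4}=1$, and values $x_1,\dots,x_4\in(0,1]$ such that the set $\{((u_i,v_i),x_i): 1\le i\le 4\}$ is shattered by $\{R_w: w\in V\}$.
   Context: $\mathcal{D}=\{(u,v)\in V\times V: u\ne v\}$. $\sigma_{uv}$ is the number of shortest paths from $u$ to $v$, $\sigma_{uv}(w)$ the number of those to which $w$ is internal ($w\ne u,v$, path through $w$); $f_w(u,v)=\sigma_{uv}(w)/\sigma_{uv}$ ($0$ if $\sigma_{uv}=0$). For $w\in V$, $R_w=\{((u,v),x)\in\mathcal{D}\times[0,1]: x\le f_w(u,v)\}$. A set $Q$ is shattered by a collection of sets $\mathcal{R}$ if $\{R\cap Q: R\in\mathcal{R}\}$ equals the power set of $Q$. *)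

(* Defs.v *)
From Stdlib Require Import Reals.
From mathcomp Require Import all_boot.
Set Implicit Arguments. Unset Strict Implicit. Unset Printing Implicit Defensive.

Definition undirected (T : finType) (e : rel T) : Prop := symmetric e /\ irreflexive e.

Section Paths.
Variables (T : finType) (e : rel T).

(* number of walks u = p0, p1, ..., pk = v with k edges (the tuple lists p1..pk) *)
Definition nwalks (k : nat) (u v : T) : nat :=
  #|[set t : k.-tuple T | path e u t && (last u t == v)]|.

(* a shortest u-v path has at most #|T|-1 edges; dist = length of a shortest
   u-v path (its value is irrelevant when v is unreachable from u) *)
Definition dist (u v : T) : nat :=
  find (fun k => 0 < nwalks k u v) (iota 0 #|T|).

Definition reachable (u v : T) : bool := dist u v < #|T|.

Definition nsp (u v : T) : nat :=
  if reachable u v then nwalks (dist u v) u v else 0.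

(* sigma_uv(w) : number of shortest u-v paths having w as an internal node
   (w <> u, v and w lies on the path; shortest walks are simple) *)
Definition nsp_thru (w u v : T) : nat :=
  if reachable u v && (w != u) && (w != v) then
    #|[set t : (dist u v).-tuple T | [&& path e u t, last u t == v & w \in t]]|
  else 0.

Definition fw (w u v : T) : R :=
  if nsp u v == 0 then R0 else Rdiv (INR (nsp_thru w u v)) (INR (nsp u v)).

End Paths.

(* Main.v *)
Require Import Defs.
From Stdlib Require Import Reals Lra.
From mathcomp Require Import all_boot.
Set Implicit Arguments. Unset Strict Implicit. Unset Printing Implicit Defensive.

Section Cnt.
Variables (T : finType) (e : rel T).

Definition cnt (a : pred T) k (u v : T) : nat :=
  \sum_(t : k.-tuple T) [&& path e u t, last u t == v & all a t].

Lemma card_sum (U : finType) (P : pred U) : #|[set t : U | P t]| = \sum_(t : U) P t.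
Proof.
rewrite -sum1_card big_mkcond /=; apply: eq_bigr => t _.
by rewrite inE; case: (P t).
Qed.

Lemma cnt0 a u v : cnt a 0 u v = (u == v).
Proof.
rewrite /cnt (big_pred1 [tuple]) /=; last by move=> t; symmetry; apply/eqP; exact: tuple0.
by rewrite andbT.
Qed.

Lemma cnt_rec a k u v :
  cnt a k.+1 u v = \sum_(y | e u y && a y) cnt a k y v.
Proof.
rewrite /cnt.
rewrite (reindex (fun p : T * k.-tuple T => [tuple of p.1 :: p.2])); last first.
  exists (fun t : k.+1.-tuple T => (thead t, [tuple of behead t])).
    case=> x t _ /=; rewrite theadE; congr (_,_); exact: val_inj.
  by move=> t _; case/tupleP: t => x t'; apply: val_inj; rewrite /= theadE.
transitivity (\sum_y \sum_(t : k.-tuple T)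
   ([&& path e u (y :: t), last u (y :: t) == v & all a (y :: t)] : nat)).
  by rewrite pair_bigA.
rewrite [RHS]big_mkcond /=; apply: eq_bigr => y _.
case: (e u y); case: (a y) => /=.
all: first [apply: eq_bigr => t _ | apply: big1 => t _].
all: by case: (path e y t); case: (last y t == v); case: (all a t).
Qed.


End Cnt.

Notation N := 34.
Definition adjl : seq (seq nat) := [:: [:: 1]; [:: 0; 2]; [:: 1; 3; 28]; [:: 2; 4; 19]; [:: 3; 5; 12]; [:: 4; 6; 29]; [:: 5; 7]; [:: 6; 8; 13]; [:: 7; 9; 21]; [:: 8]; [:: 11]; [:: 10; 12]; [:: 4; 11; 22]; [:: 7; 14; 25]; [:: 13; 15; 32]; [:: 14; 16]; [:: 15]; [:: 18; 20]; [:: 17; 19]; [:: 3; 18]; [:: 17; 21]; [:: 8; 20]; [:: 12; 23]; [:: 22; 24]; [:: 23; 26]; [:: 13; 26; 33]; [:: 24; 25]; [:: 28; 31]; [:: 2; 27]; [:: 5; 30]; [:: 29; 33]; [:: 27; 32]; [:: 14; 31]; [:: 25; 30]].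
Definition en (x y : nat) : bool := y \in nth [::] adjl x.
Definition eG : rel 'I_N := fun x y => en x y.

Lemma adjl_ok : all (fun x => uniq (nth [::] adjl x) && all (fun n => n < N) (nth [::] adjl x)) (iota 0 N).
Proof. by vm_compute. Qed.

Lemma sum_ord_list (l : seq nat) (P : pred 'I_N) (Pn : nat -> bool) (F : nat -> nat) :
  uniq l -> all (fun n => n < N) l -> (forall y : 'I_N, P y = Pn y) ->
  \sum_(y : 'I_N | ((y:nat) \in l) && P y) F y = sumn [seq F y | y <- l & Pn y].
Proof.
move=> Ul Al HP.
rewrite (eq_bigl (fun y : 'I_N => ((y : nat) \in l) && Pn y)); last by move=> y; rewrite HP.
rewrite -(big_mkord (fun n => (n \in l) && Pn n) F) /index_iota subn0 -big_filter.
rewrite sumnE big_map big_filter -big_filter.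
apply: perm_big; apply: uniq_perm.
- by apply: filter_uniq; exact: iota_uniq.
- by apply: filter_uniq.
move=> i; rewrite !mem_filter mem_iota add0n /=.
case Hi: (i \in l); last by rewrite !andbF.
by rewrite (allP Al i Hi) andbT.
Qed.

Fixpoint gn (a : nat -> bool) (k : nat) (v : nat) : seq nat :=
  if k is k'.+1 then
    let g := gn a k' v in
    [seq sumn [seq nth 0 g y | y <- nth [::] adjl x & a y] | x <- iota 0 N]
  else [seq nat_of_bool (x == v) | x <- iota 0 N].

Lemma gn0 a v : gn a 0 v = [seq nat_of_bool (x == v) | x <- iota 0 N].
Proof. by []. Qed.
Lemma gnS a k v : gn a k.+1 v =
  [seq sumn [seq nth 0 (gn a k v) y | y <- nth [::] adjl x & a y] | x <- iota 0 N].
Proof. by []. Qed.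

Lemma gnE (a : pred 'I_N) (an : nat -> bool) (Ha : forall y : 'I_N, a y = an y)
  k (x v : 'I_N) : cnt eG a k x v = nth 0 (gn an k v) x.
Proof.
elim: k x => [|k IH] x.
  by rewrite cnt0 gn0 (nth_map 0) ?size_iota // nth_iota // add0n.
rewrite cnt_rec gnS (nth_map 0) ?size_iota // nth_iota // add0n.
rewrite (eq_bigr (fun y : 'I_N => nth 0 (gn an k v) y)); last by move=> y _; exact: IH.
have /allP/(_ x) := adjl_ok; rewrite mem_iota /= => /(_ (ltn_ord x)) /andP[U A].
exact: sum_ord_list.
Qed.

Definition distn (u v : nat) := find (fun k => 0 < nth 0 (gn (fun _ => true) k v) u) (iota 0 N).
Definition nspn (u v : nat) :=
  if distn u v < N then nth 0 (gn (fun _ => true) (distn u v) v) u else 0.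
Definition thrun (w u v : nat) :=
  if (distn u v < N) && (w != u) && (w != v) then
    nth 0 (gn (fun _ => true) (distn u v) v) u - nth 0 (gn (fun n => n != w) (distn u v) v) u
  else 0.

Lemma nwalksE k (u v : 'I_N) : nwalks eG k u v = nth 0 (gn (fun _ => true) k v) u.
Proof.
rewrite /nwalks card_sum -(gnE (a := predT)) // /cnt; apply: eq_bigr => t _.
by rewrite all_predT andbT.
Qed.

Lemma distE (u v : 'I_N) : Defs.dist eG u v = distn u v.
Proof. by rewrite /Defs.dist card_ord; apply: eq_find => k; rewrite nwalksE. Qed.

Lemma nspE (u v : 'I_N) : nsp eG u v = nspn u v.
Proof. by rewrite /nsp /nspn /reachable distE card_ord nwalksE. Qed.

Lemma thruE (w u v : 'I_N) : nsp_thru eG w u v = thrun w u v.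
Proof.
rewrite /nsp_thru /thrun /reachable distE card_ord.
case: ifP => // _.
rewrite card_sum.
rewrite -(gnE (a := predT)) // -(gnE (a := predC1 w)) //.
rewrite /cnt.
set d := distn u v.
have -> : \sum_(t : d.-tuple 'I_N) [&& path eG u t, last u t == v & all predT t] =
   \sum_(t : d.-tuple 'I_N) [&& path eG u t, last u t == v & w \in t] +
   \sum_(t : d.-tuple 'I_N) [&& path eG u t, last u t == v & all (predC1 w) t].
  rewrite -big_split /=; apply: eq_bigr => t _.
  have -> : all (predC1 w) t = (w \notin t).
    apply/allP/idP => [H|H x Hx].
      by apply/negP => Hw; move: (H w Hw); rewrite /= eqxx.
    by apply/eqP => Ex; move: H; rewrite -Ex Hx.
  by rewrite all_predT; case: (path eG u t); case: (last u t == v); case: (w \in t).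
by rewrite addnK.
Qed.

Definition Un (i : nat) : nat := nth 0 [:: 17; 27; 0; 10] i.
Definition Wn (i : nat) : nat := nth 0 [:: 24; 30; 9; 16] i.
Definition patn (w : nat) : seq bool := [seq 0 < thrun w (Un i) (Wn i) | i <- iota 0 4].

Lemma pat_all b0 b1 b2 b3 : has (fun w => patn w == [:: b0; b1; b2; b3]) (iota 0 N).
Proof. by case: b0; case: b1; case: b2; case: b3; vm_compute. Qed.

Lemma sym_ok : all (fun x => all (fun y => en x y == en y x) (iota 0 N)) (iota 0 N).
Proof. by vm_compute. Qed.
Lemma irr_ok : all (fun x => ~~ en x x) (iota 0 N).
Proof. by vm_compute. Qed.

Lemma Un_lt n : Un n < N. Proof. by rewrite /Un /Wn; case: n => [|[|[|[|n]]]] //=; rewrite nth_nil. Qed.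
Lemma Wn_lt n : Wn n < N. Proof. by rewrite /Un /Wn; case: n => [|[|[|[|n]]]] //=; rewrite nth_nil. Qed.

Lemma nsp12 (i : 'I_4) : (nspn (Un i) (Wn i) == 1) || (nspn (Un i) (Wn i) == 2).
Proof. by case: i => [[|[|[|[|m]]]] Hm] //; vm_compute. Qed.
Lemma UWneq (i : 'I_4) : Un i != Wn i.
Proof. by case: i => [[|[|[|[|m]]]] Hm]. Qed.

Lemma real_iff s k : 0 < s -> Rle (Rinv (INR s)) (Rdiv (INR k) (INR s)) <-> 0 < k.
Proof.
move=> Hs.
have Hp : Rlt R0 (Rinv (INR s)) by apply: Rinv_0_lt_compat; apply: lt_0_INR; apply/ltP.
rewrite /Rdiv; split => H.
  have H1 : Rle (INR 1) (INR k).
    apply: (Rmult_le_reg_r _ _ _ Hp); by rewrite /= Rmult_1_l.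
  by apply/leP; apply: INR_le.
have H1 : Rle (INR 1) (INR k) by apply: le_INR; apply/leP.
rewrite -[X in Rle X _]Rmult_1_l.
apply: Rmult_le_compat_r; first exact: Rlt_le.
by [].
Qed.

Theorem lemma4 :
  exists (T : finType) (e : rel T), undirected e /\
  exists (u v : 'I_4 -> T) (x : 'I_4 -> R),
    (forall i, u i != v i) /\
    nsp e (u (@inord 3 0)) (v (@inord 3 0)) = 2 /\ nsp e (u (@inord 3 1)) (v (@inord 3 1)) = 2 /\
    nsp e (u (@inord 3 2)) (v (@inord 3 2)) = 1 /\ nsp e (u (@inord 3 3)) (v (@inord 3 3)) = 1 /\
    (forall i, Rlt R0 (x i) /\ Rle (x i) R1) /\
    (forall S : {set 'I_4}, exists w : T,
       forall i, i \in S <-> Rle (x i) (fw e w (u i) (v i))).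
Proof.
exists 'I_N, eG; split.
  split.
    move=> x y.
    have Hx : (x : nat) \in iota 0 N by rewrite mem_iota leq0n add0n ltn_ord.
    have Hy : (y : nat) \in iota 0 N by rewrite mem_iota leq0n add0n ltn_ord.
    have H := allP sym_ok x Hx.
    by have /eqP := allP H y Hy.
  move=> x.
  have Hx : (x : nat) \in iota 0 N by rewrite mem_iota leq0n add0n ltn_ord.
  by have /negbTE := allP irr_ok x Hx.
exists (fun i => inord (Un i)), (fun i => inord (Wn i)),
  (fun i => Rinv (INR (nspn (Un i) (Wn i)))).
split.
  by move=> i; rewrite -(inj_eq val_inj) /= !inordK ?Un_lt ?Wn_lt // UWneq.
split; first by rewrite nspE !inordK ?Un_lt ?Wn_lt //; vm_compute.
split; first by rewrite nspE !inordK ?Un_lt ?Wn_lt //; vm_compute.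
split; first by rewrite nspE !inordK ?Un_lt ?Wn_lt //; vm_compute.
split; first by rewrite nspE !inordK ?Un_lt ?Wn_lt //; vm_compute.
split.
  move=> i; case/orP: (nsp12 i) => /eqP ->; simpl INR; split; lra.
move=> S.
have := pat_all (inord 0 \in S) (inord 1 \in S) (inord 2 \in S) (inord 3 \in S).
case/hasP => w Hw /eqP Hp.
have Hwl : w < N by rewrite mem_iota in Hw.
exists (Ordinal Hwl) => i.
have Hi : (i \in S) = nth false (patn w) i.
  rewrite Hp; case: i => [[|[|[|[|m]]]] Hm] //=; congr (_ \in S); apply: val_inj; by rewrite /= inordK.
have Hi2 : nth false (patn w) i = (0 < thrun w (Un i) (Wn i)).
  by rewrite /patn (nth_map 0) ?size_iota // nth_iota.
rewrite Hi Hi2 /fw nspE thruE /= !inordK ?Un_lt ?Wn_lt //.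
have Hs : 0 < nspn (Un i) (Wn i) by case/orP: (nsp12 i) => /eqP ->.
rewrite ifN; last by rewrite -lt0n.
by rewrite real_iff.
Qed.
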